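(* Let $\Phi:\mathcal H\to\mathrm{End}_{\mathbb K}(V^{\otimes n})$ be the representation with $\Phi(g_a)=T_a$ ($0\le a\le n-1$) and let $\Psi^{\otimes n}:U_q(\mathfrak g)\to\mathrm{End}_{\mathbb K}(V^{\otimes n})$ be the tensor-power vector representation, both as in the context. Then for all $X\in\mathcal H$ and $Y\in U_q(\mathfrak g)$, $$\Phi(X)\Psi^{\otimes n}(Y)=\Psi^{\otimes n}(Y)\Phi(X).$$
   Context: Let $m,n\ge 1$, $\mathbb K=\mathbb C(q,Q_1,\dots,Q_m)$ (indeterminates). Cyclotomic Hecke algebra $\mathcal H$: the unital $\mathbb K$-algebra generated by $g_0,\dots,g_{n-1}$ with relations $(g_0-Q_1)\cdots(g_0-Q_m)=0$, $g_0g_1g_0g_1=g_1g_0g_1g_0$, $g_i^2=(q-q^{-1})g_i+1$ ($1\le i\le n-1$), $g_ig_j=g_jg_i$ ($|i-j|\ge2$), $g_ig_{i+1}g_i=g_{i+1}g_ig_{i+1}$ ($1\le i\le n-2$). Superspace and Hecke action: fix nonnegative integers $k_1,\dots,k_m,\ell_1,\dots,\ell_m$, $N=\sum_c(k_c+\ell_c)>0$, $d_c=\sum_{j\le c}(k_j+\ell_j)$. $V$ is a $\mathbb K$-superspace with homogeneous basis $\{v^{(c)}_a:1\le c\le m,1\le a\le k_c+\ell_c\}$, $v^{(c)}_a$ even iff $a\le k_c$, of colour $c$; ordered by $v^{(c)}_a<v^{(c')}_b$ iff $c<c'$ or ($c=c'$, $a<b$), and written $u_1<\cdots<u_N$ (so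 colour $c$ occupies positions $d_{c-1}+1,\dots,d_c$, $d_0=0$). $\bar j$ is the parity of $u_j$, $\mathrm{col}(j)$ its colour. For $\mathbf i=(i_1,\dots,i_n)\in\{1,\dots,N\}^n$, $\mathbf i$ also denotes $u_{i_1}\otimes\cdots\otimes u_{i_n}$, $c_t(\mathbf i)=\mathrm{col}(i_t)$, and $\mathbf i s_a$ is $\mathbf i$ with entries $a,a+1$ swapped. Operators: $s_a(\mathbf i)=(-1)^{\bar i_a}\mathbf i$ if $i_a=i_{a+1}$, else $(-1)^{\bar i_a\bar i_{a+1}}\mathbf i s_a$; $T_a(\mathbf i)=(q-q^{-1})\mathbf i+(-1)^{\bar i_a\bar i_{a+1}}\mathbf i s_a$ if $i_a<i_{a+1}$, $=\frac{(q-q^{-1})+(-1)^{\bar i_a}(q+q^{-1})}{2}\mathbf i$ if $i_a=i_{a+1}$, $=(-1)^{\bar i_a\bar i_{a+1}}\mathbf i s_a$ if $i_a>i_{a+1}$; $S_a(\mathbf i)=T_a(\mathbf i)$ if $c_a(\mathbf i)=c_{a+1}(\mathbf i)$, else $s_a(\mathbf i)$; $S_0(\mathbf i)=Q_{c_1(\mathbf i)}\mathbf i$; $\theta=S_{n-1}\cdots S_1$; $T_0=T_1^{-1}\cdots T_{n-1}^{-1}\theta S_0$. The assignment $g_a\mapsto T_a$ extends to a representation $\Phi$ of $\mathcal H$. Quantum superalgebra action: $\mathfrak g=\mathfrak{gl}(k_1|\ell_1)\oplus\cdots\oplus\mathfrak{gl}(k_m|\ell_m)\subseteq\mathfrak{gl}(k|\ell)$,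 $k=\sum k_c$, $\ell=\sum\ell_c$, and $U_q(\mathfrak g)$ is its quantized enveloping superalgebra, viewed as the subalgebra of the quantum general linear superalgebra (with respect to the ordered homogeneous basis $u_1,\dots,u_N$) generated by $K_b^{\pm1}$ ($1\le b\le N$) and $E_a,F_a$ for $a\in\{1,\dots,N-1\}\setminus\{d_1,\dots,d_{m-1}\}$; $E_a,F_a$ have parity $\bar a+\overline{a+1}$, $K_b$ are even. Vector representation $\Psi$ on $V$: $E_au_{a+1}=(-1)^{\overline{a+1}}u_a$, $E_au_j=0$ ($j\ne a+1$); $F_au_a=(-1)^{\bar a}u_{a+1}$, $F_au_j=0$ ($j\neq a$); $K_b^{\pm1}u_j=q^{\pm(-1)^{\bar j}\delta_{bj}}u_j$. With $\widetilde K_a=K_aK_{a+1}^{-1}$, the representation $\Psi^{\otimes n}$ on $V^{\otimes n}$ (from the coproduct $\Delta(K_b)=K_b\otimes K_b$, $\Delta(E_a)=E_a\otimes\widetilde K_a+1\otimes E_a$, $\Delta(F_a)=F_a\otimes1+\widetilde K_a^{-1}\otimes F_a$) is given by $\Psi^{\otimes n}(E_a)=\sum_{p=0}^{n-1}\widetilde K_a^{\otimes p}\otimes\Psi(E_a)\otimes\mathrm{Id}^{\otimes(n-1-p)}$, $\Psi^{\otimes n}(F_a)=\sum_{p=0}^{n-1}\mathrm{Id}^{\otimes p}\otimes\Psi(F_a)\otimes(\widetilde K_a^{-1})^{\otimes(n-1-p)}$, $\Psi^{\otimes n}(K_b)=K_b^{\otimes n}$, where tensor products of homogeneous operators act with the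 Koszul sign $(\phi\otimes\psi)(x\otimes y)=(-1)^{\bar x\bar\psi}\phi(x)\otimes\psi(y)$. *)

(* Defs.v *)
From HB Require Import structures.
From mathcomp Require Import all_boot all_algebra.
From mathcomp Require Import Rstruct complex fraction.
From mathcomp Require Import mpoly.

Set Implicit Arguments.
Unset Strict Implicit.
Unset Printing Implicit Defensive.
Import GRing.Theory.
Local Open Scope ring_scope.

Definition Cfield : idomainType := (Rdefinitions.R)[i].

(* K = C(q, Q_1, ..., Q_m): the field of fractions of C[X_0, ..., X_m],
   with q = X_0 and Q_c = X_c (1 <= c <= m). *)
Definition Kf (m : nat) : fieldType := {fraction {mpoly Cfield[m.+1]}}.
Definition qv (m : nat) : Kf m := FracField.tofrac ('X_(@ord0 m) : {mpoly Cfield[m.+1]}).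
Definition Qv (m : nat) (c : nat) : Kf m :=
  FracField.tofrac ('X_(@inord m c) : {mpoly Cfield[m.+1]}).

Inductive gen_alg (K : fieldType) (d : nat) (S : 'M[K]_d -> Prop)
  : 'M[K]_d -> Prop :=
  | ga_gen M : S M -> gen_alg S M
  | ga_one : gen_alg S 1%:M
  | ga_add A B : gen_alg S A -> gen_alg S B -> gen_alg S (A + B)
  | ga_scale (c : K) A : gen_alg S A -> gen_alg S (c *: A)
  | ga_mul A B : gen_alg S A -> gen_alg S B -> gen_alg S (A *m B).

Section Setup.
(* Colours are numbered 1..m; k c, l c for 1 <= c <= m (other values unused).
   Basis positions u_1 < ... < u_N are numbered 1..N (paper convention);
   tensor positions are numbered 1..n. *)
Variables (m n : nat) (k l : nat -> nat).

Local Notation K := (Kf m).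
Local Notation q := (qv m).

Definition dd (c : nat) : nat := (\sum_(1 <= j < c.+1) (k j + l j))%N.
Definition NN : nat := dd m.

(* colour of basis position j (1 <= j <= N): the c with d_{c-1} < j <= d_c *)
Definition colr (j : nat) : nat :=
  (\sum_(1 <= c < m) nat_of_bool (dd c < j)%N).+1.
(* parity of u_j (true = odd): u_j = v^{(c)}_a with a = j - d_{c-1},
   even iff a <= k_c *)
Definition par (j : nat) : bool :=
  ~~ (j - dd (colr j).-1 <= k (colr j))%N.

Definition sgn (b : bool) : K := (-1) ^+ b.

(* basis of V^{\otimes n}: i = (i_1,..,i_n), stored 0-based as ordinals *)
Definition Tn := {ffun 'I_n -> 'I_NN}.

(* i_p, as a number in 1..N, for tensor position p in 1..n *)
Definition ent (x : Tn) (p : nat) : nat :=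
  (nth 0%N [seq val (x t) | t <- enum 'I_n] p.-1).+1.

(* x s_a : entries at positions a, a+1 swapped (1 <= a <= n-1) *)
Definition swp (x : Tn) (a : nat) : Tn :=
  [ffun t : 'I_n => x (insubd t (if val t == a.-1 then a
                                else if val t == a then a.-1 else val t))].

(* x with the entry at position p replaced by u_v (1 <= v <= N) *)
Definition repl (x : Tn) (p v : nat) : Tn :=
  [ffun t : 'I_n => if val t == p.-1 then insubd (x t) v.-1 else x t].

Definition dl (x y : Tn) : K := (x == y)%:R.

(* A coefficient function f : Tn -> Tn -> K (f x y = coefficient of y in the
   image of x) and its matrix (column s = image of the s-th basis vector). *)
Definition mat (f : Tn -> Tn -> K) : 'M[K]_#|Tn| :=
  \matrix_(r, s) f (enum_val s) (enum_val r).

Definition Tc (a : nat) (x y : Tn) : K :=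
  let ia := ent x a in let ib := ent x a.+1 in
  if (ia < ib)%N then (q - q^-1) * dl x y + sgn (par ia && par ib) * dl (swp x a) y
  else if ia == ib then ((q - q^-1) + sgn (par ia) * (q + q^-1)) / 2%:R * dl x y
  else sgn (par ia && par ib) * dl (swp x a) y.

Definition sc (a : nat) (x y : Tn) : K :=
  let ia := ent x a in let ib := ent x a.+1 in
  if ia == ib then sgn (par ia) * dl x y
  else sgn (par ia && par ib) * dl (swp x a) y.

Definition Sc (a : nat) (x y : Tn) : K :=
  if colr (ent x a) == colr (ent x a.+1) then Tc a x y else sc a x y.

Definition S0c (x y : Tn) : K := Qv m (colr (ent x 1)) * dl x y.

Definition Tmat (a : nat) : 'M[K]_#|Tn| := mat (Tc a).

(* theta = S_{n-1} ... S_1 *)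
Definition theta : 'M[K]_#|Tn| :=
  foldr (fun a M => mat (Sc a) *m M) 1%:M (rev (iota 1 n.-1)).

(* T_0 = T_1^{-1} ... T_{n-1}^{-1} theta S_0 *)
Definition T0mat : 'M[K]_#|Tn| :=
  foldr (fun a M => invmx (Tmat a) *m M) (theta *m mat S0c) (iota 1 n.-1).

(* Phi(g_0) = T_0, Phi(g_a) = T_a (1 <= a <= n-1) *)
Definition PhiGen (M : 'M[K]_#|Tn|) : Prop :=
  M = T0mat \/ exists a, [/\ (1 <= a)%N, (a <= n.-1)%N & M = Tmat a].

(* eigenvalue of K_b on u_j *)
Definition kb (b j : nat) : K :=
  if j == b then (if par j then q^-1 else q) else 1.
(* eigenvalue of \tilde K_a = K_a K_{a+1}^{-1} on u_j *)
Definition kt (a j : nat) : K := kb a j * (kb a.+1 j)^-1.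

(* parity of E_a, F_a *)
Definition parEF (a : nat) : bool := par a (+) par a.+1.

Definition oddbefore (x : Tn) (p : nat) : bool :=
  odd (\sum_(r < p) nat_of_bool (par (ent x r.+1))).

(* Psi^{(x)n}(E_a) = sum_{p=1}^n Kt^{(x)(p-1)} (x) E_a (x) Id^{(x)(n-p)} *)
Definition Ec (a : nat) (x y : Tn) : K :=
  \sum_(p < n)
    (if ent x p.+1 == a.+1 then
       (\prod_(r < p) kt a (ent x r.+1)) * sgn (parEF a && oddbefore x p)
       * sgn (par a.+1) * dl (repl x p.+1 a) y
     else 0).

(* Psi^{(x)n}(F_a) = sum_{p=1}^n Id^{(x)(p-1)} (x) F_a (x) (Kt^{-1})^{(x)(n-p)} *)
Definition Fc (a : nat) (x y : Tn) : K :=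
  \sum_(p < n)
    (if ent x p.+1 == a then
       sgn (parEF a && oddbefore x p) * sgn (par a)
       * (\prod_(r < n | (p < r)%N) (kt a (ent x r.+1))^-1)
       * dl (repl x p.+1 a.+1) y
     else 0).

Definition Kc (b : nat) (x y : Tn) : K :=
  (\prod_(p < n) kb b (ent x p.+1)) * dl x y.
Definition Kic (b : nat) (x y : Tn) : K :=
  (\prod_(p < n) (kb b (ent x p.+1))^-1) * dl x y.

(* generators of U_q(g): K_b^{+-1} (1 <= b <= N), E_a, F_a for
   a in {1..N-1} \ {d_1, ..., d_{m-1}} *)
Definition PsiGen (M : 'M[K]_#|Tn|) : Prop :=
  (exists b, [/\ (1 <= b)%N, (b <= NN)%N & (M = mat (Kc b) \/ M = mat (Kic b))])
  \/ (exists a, [/\ (1 <= a)%N, (a < NN)%N, a \notin [seq dd c | c <- iota 1 m.-1]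
                 & (M = mat (Ec a) \/ M = mat (Fc a))]).

End Setup.

Arguments PhiGen m n k l M : clear implicits.
Arguments PsiGen m n k l M : clear implicits.

(* Main.v *)
Require Import Defs.
From HB Require Import structures.
From mathcomp Require Import all_boot all_algebra.
From mathcomp Require Import Rstruct complex fraction.
From mathcomp Require Import mpoly.
From mathcomp Require Import ring.
Local Open Scope ring_scope.
Set Implicit Arguments.
Unset Strict Implicit.
Unset Printing Implicit Defensive.
Import GRing.Theory.
From mathcomp Require Import zify.
Section PartA.
Variables (R : comUnitRingType) (d : nat).
Implicit Types A Y X : 'M[R]_d.

Lemma comm_invmx A Y : A *m Y = Y *m A -> invmx A *m Y = Y *m invmx A.
Proof.
move=> H; case: (boolP (A \in unitmx)) => uA; last by rewrite invmx_out.
have E : invmx A *m (A *m Y) *m invmx A = invmx A *m (Y *m A) *m invmx A by rewrite H.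
move: E; rewrite !mulmxA mulVmx // mul1mx -!mulmxA mulmxV // mulmx1 => E; rewrite E.
by [].

Qed.

Lemma comm_foldr (F : nat -> 'M[R]_d) B Y s :
  (forall a, a \in s -> F a *m Y = Y *m F a) -> B *m Y = Y *m B ->
  foldr (fun a M => F a *m M) B s *m Y = Y *m foldr (fun a M => F a *m M) B s.
Proof.
elim: s => [|a s IH] H HB /=; first done.
rewrite -mulmxA IH //; last by move=> b bs; apply: H; rewrite inE bs orbT.
by rewrite !mulmxA H // inE eqxx.
Qed.
End PartA.

Lemma gen_comm_l (F : fieldType) d (S : 'M[F]_d -> Prop) (Y : 'M[F]_d) :
  (forall X, S X -> X *m Y = Y *m X) -> forall X, gen_alg S X -> X *m Y = Y *m X.
Proof.
move=> H X; elim => {X} [M /H //| | A B _ HA _ HB | c A _ HA | A B _ HA _ HB].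
- by rewrite mul1mx mulmx1.
- by rewrite mulmxDl mulmxDr HA HB.
- by rewrite -scalemxAl -scalemxAr HA.
- by rewrite -mulmxA HB !mulmxA HA.
Qed.

Lemma gen_comm (F : fieldType) d (S T : 'M[F]_d -> Prop) :
  (forall X Y, S X -> T Y -> X *m Y = Y *m X) ->
  forall X Y, gen_alg S X -> gen_alg T Y -> X *m Y = Y *m X.
Proof.
move=> H X Y gX gY; apply: (gen_comm_l _ gX) => X' SX'.
apply/esym; apply: (gen_comm_l _ gY) => Y' TY'.
exact/esym/H.
Qed.

Section PartB.
Variables (m n : nat) (k l : nat -> nat).
Local Notation K := (Kf m).
Local Notation T := (Tn m n k l).
Local Notation N := (NN m k l).
Local Notation par := (par m k l).
Local Notation colr := (colr m k l).
Local Notation sgn := (sgn m).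
Local Notation kt := (kt m k l).
Local Notation kb := (kb m k l).
Local Notation q := (qv m).
Implicit Types x y z w : T.

Definition comp (f g : T -> T -> K) x z := \sum_y f x y * g y z.

Lemma mat_mul f g : mat f *m mat g = mat (comp g f).
Proof.
apply/matrixP => r s; rewrite /mat !mxE /comp.
transitivity (\sum_(y in T) g (enum_val s) y * f y (enum_val r)); last first.
  by apply: eq_bigl => y; rewrite inE.
rewrite [RHS]big_enum_val; apply: eq_bigr => t _; by rewrite !mxE mulrC.
Qed.

Lemma mat_comm f g : (forall x z, comp f g x z = comp g f x z) ->
  mat f *m mat g = mat g *m mat f.
Proof. by move=> H; rewrite !mat_mul; apply/matrixP => r s; rewrite !mxE H. Qed.

Lemma sum_dl w (g : T -> K) : \sum_y dl w y * g y = g w.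
Proof.
rewrite (bigD1 w) //= /dl eqxx mul1r big1 ?addr0 // => y ny.
by rewrite eq_sym (negbTE ny) mul0r.
Qed.

Lemma dlxx w : dl w w = 1.
Proof. by unfold dl; rewrite eqxx. Qed.
Lemma dl_neq w z : w != z -> dl w z = 0.
Proof. by unfold dl => /negbTE ->. Qed.

Definition e x (t : 'I_n) : nat := (x t).+1.

Lemma entE x (t : 'I_n) : ent x t.+1 = e x t.
Proof. by rewrite /ent /= (nth_map t) ?size_enum_ord // nth_ord_enum. Qed.

Lemma e_gt0 x t : (0 < e x t)%N. Proof. by []. Qed.
Lemma e_le x t : (e x t <= N)%N. Proof. exact: ltn_ord. Qed.

Lemma eq_T x y : (forall t, e x t = e y t) -> x = y.
Proof. by move=> H; apply/ffunP => t; apply/val_inj; have := H t; case. Qed.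

Lemma e_repl x (p : 'I_n) v t : (0 < v)%N -> (v <= N)%N ->
  e (repl x p.+1 v) t = if t == p then v else e x t.
Proof.
move=> v0 vN; rewrite /e /repl ffunE.
have -> : (val t == p.+1.-1) = (t == p) by [].
case: (t == p); last by [].
rewrite val_insubd prednK //.
by case: v v0 vN => [//|v] _ /= ->.
Qed.

Definition ifz (c : bool) (X : K) : (if c then X else 0) = c%:R * X.
Proof. by case: c; rewrite ?mul1r ?mul0r. Qed.

Definition diag (d : T -> K) x y := d x * dl x y.

Lemma comp_diag_l d g x z : comp (diag d) g x z = d x * g x z.
Proof.
rewrite /comp /diag (eq_bigr (fun y => d x * (dl x y * g y z))); last by move=> y _; rewrite mulrA.
by rewrite -mulr_sumr sum_dl.
Qed.

Lemma comp_diag_r d g x z : comp g (diag d) x z = g x z * d z.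
Proof.
rewrite /comp /diag (bigD1 z) //= dlxx mulr1 big1 ?addr0 //.
by move=> y ny; rewrite dl_neq ?mulr0.
Qed.

Lemma dl_diag d w z : dl w z * d z = dl w z * d w.
Proof. by rewrite /dl; case: (w =P z) => [->|_]; rewrite ?mul0r. Qed.




Lemma sum_split2 (F G : 'I_n -> K) (i0 i1 : 'I_n) : i0 != i1 ->
  (forall p, p != i0 -> p != i1 -> F p = G p) -> F i0 + F i1 = G i0 + G i1 ->
  \sum_p F p = \sum_p G p.
Proof.
move=> n01 H H01.
have n10 : i1 != i0 by rewrite eq_sym.
rewrite (bigD1 i0) // (bigD1 i1) //= [in RHS](bigD1 i0) // [in RHS](bigD1 i1) //=.
rewrite !addrA H01; congr (_ + _); apply: eq_bigr => p /andP [np0 np1]; exact: H.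
Qed.

Lemma sgnX s o p : sgn (s && (o (+) p)) = sgn (s && o) * sgn (s && p).
Proof. by case: s; case: o; case: p; rewrite /sgn /= ?mul1r ?mulr1 ?mulN1r ?opprK. Qed.

Definition alT (i j : nat) : K :=
  if (i < j)%N then q - q^-1
  else if i == j then ((q - q^-1) + sgn (par i) * (q + q^-1)) / 2%:R else 0.
Definition beT (i j : nat) : K :=
  if (i < j)%N then sgn (par i && par j) else if i == j then 0 else sgn (par i && par j).
Definition alS (i j : nat) : K :=
  if colr i == colr j then alT i j else if i == j then sgn (par i) else 0.
Definition beS (i j : nat) : K :=
  if colr i == colr j then beT i j else if i == j then 0 else sgn (par i && par j).

Definition cE b x (p : 'I_n) : K :=
  (\prod_(r < n | (r < p)%N) kt b (e x r)) *
  sgn (parEF m k l b && odd (\sum_(r < n | (r < p)%N) nat_of_bool (par (e x r)))) *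
  sgn (par b.+1).

Definition cF b x (p : 'I_n) : K :=
  sgn (parEF m k l b && odd (\sum_(r < n | (r < p)%N) nat_of_bool (par (e x r)))) *
  sgn (par b) * (\prod_(r < n | (p < r)%N) (kt b (e x r))^-1).

Lemma EcE b x y : Ec b x y =
  \sum_(p < n) (if e x p == b.+1 then cE b x p * dl (repl x p.+1 b) y else 0).
Proof.
rewrite /Ec; apply: eq_bigr => p _; rewrite entE /cE /oddbefore.
rewrite (big_ord_widen n (fun r => kt b (ent x r.+1)) (ltnW (ltn_ord p))).
rewrite (big_ord_widen n (fun r => nat_of_bool (par (ent x r.+1))) (ltnW (ltn_ord p))).
by under eq_bigr => r _ do rewrite entE; under [X in odd X]eq_bigr => r _ do rewrite entE.
Qed.

Lemma FcE b x y : Fc b x y =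
  \sum_(p < n) (if e x p == b then cF b x p * dl (repl x p.+1 b.+1) y else 0).
Proof.
rewrite /Fc; apply: eq_bigr => p _; rewrite entE /cF /oddbefore.
rewrite (big_ord_widen n (fun r => nat_of_bool (par (ent x r.+1))) (ltnW (ltn_ord p))).
have E1 : (\sum_(i < n | (i < p)%N) nat_of_bool (par (ent x i.+1)) =
    \sum_(r < n | (r < p)%N) nat_of_bool (par (e x r)))%N by apply: eq_bigr => r _; rewrite entE.
have E2 : \prod_(r < n | (p < r)%N) (kt b (ent x r.+1))^-1 = \prod_(r < n | (p < r)%N) (kt b (e x r))^-1.
  by apply: eq_bigr => r _; rewrite entE.
by rewrite E1 E2.
Qed.

Lemma comp_Ec_l b A x z : comp (Ec b) A x z =
  \sum_(p < n) (if e x p == b.+1 then cE b x p * A (repl x p.+1 b) z else 0).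
Proof.
rewrite /comp; under eq_bigr => y _ do rewrite EcE mulr_suml.
rewrite exchange_big /=; apply: eq_bigr => p _.
case: ifP => _; last by rewrite big1 // => y _; rewrite mul0r.
under eq_bigr => y _ do rewrite -mulrA.
by rewrite -mulr_sumr sum_dl.
Qed.

Lemma comp_Fc_l b A x z : comp (Fc b) A x z =
  \sum_(p < n) (if e x p == b then cF b x p * A (repl x p.+1 b.+1) z else 0).
Proof.
rewrite /comp; under eq_bigr => y _ do rewrite FcE mulr_suml.
rewrite exchange_big /=; apply: eq_bigr => p _.
case: ifP => _; last by rewrite big1 // => y _; rewrite mul0r.
under eq_bigr => y _ do rewrite -mulrA.
by rewrite -mulr_sumr sum_dl.
Qed.


Section Loc.
Variables (P : nat) (HP : (P.+1 < n)%N).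

Definition iP : 'I_n := Ordinal (ltnW HP).
Definition iP1 : 'I_n := Ordinal HP.

Lemma iP_neq : iP != iP1.
Proof. by rewrite -val_eqE /= ltn_eqF. Qed.

Definition sw (t : 'I_n) : 'I_n :=
  insubd t (if val t == P.+1.-1 then P.+1 else if val t == P.+1 then P.+1.-1 else val t).

Lemma val_sw t : val (sw t) = if t == iP then P.+1 else if t == iP1 then P else val t.
Proof.
rewrite /sw val_insubd /=.
have -> : (t == iP) = (val t == P) by [].
have -> : (t == iP1) = (val t == P.+1) by [].
case: eqP => [->|_]; first by rewrite HP.
case: eqP => [->|_]; first by rewrite ltnW.
by rewrite ltn_ord.
Qed.

Lemma sw_iP : sw iP = iP1.
Proof. by apply/val_inj; rewrite val_sw eqxx. Qed.
Lemma sw_iP1 : sw iP1 = iP.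
Proof. by apply/val_inj; rewrite val_sw eq_sym (negbTE iP_neq) eqxx. Qed.
Lemma sw_other t : t != iP -> t != iP1 -> sw t = t.
Proof. by move=> h0 h1; apply/val_inj; rewrite val_sw (negbTE h0) (negbTE h1). Qed.

Lemma swK t : sw (sw t) = t.
Proof.
case: (eqVneq t iP) => [->|h0]; first by rewrite sw_iP sw_iP1.
case: (eqVneq t iP1) => [->|h1]; first by rewrite sw_iP1 sw_iP.
by rewrite !sw_other.
Qed.

Lemma sw_inj : injective sw.
Proof. exact: (can_inj swK). Qed.

Lemma e_swp x t : e (swp x P.+1) t = e x (sw t).
Proof. by rewrite /e /swp ffunE. Qed.

Lemma big_swp (R : Type) (idx : R) (op : Monoid.com_law idx) (Pr : pred 'I_n)
   (G : nat -> R) x :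
  (forall t, Pr (sw t) = Pr t) ->
  \big[op/idx]_(t | Pr t) G (e (swp x P.+1) t) = \big[op/idx]_(t | Pr t) G (e x t).
Proof.
move=> HPr; rewrite (reindex_inj sw_inj); apply: eq_big => t; first exact: HPr.
by move=> _; rewrite e_swp swK.
Qed.

Lemma sw_lt (p : nat) t : p != P -> p != P.+1 -> (sw t < p)%N = (t < p)%N.
Proof.
move=> h0 h1; rewrite val_sw.
case: (eqVneq t iP) => [->|_] /=; first by apply/idP/idP => ?; lia.
case: (eqVneq t iP1) => [->|_] /=; first by apply/idP/idP => ?; lia.
by [].
Qed.

Lemma sw_gt (p : nat) t : p != P -> p != P.+1 -> (p < sw t)%N = (p < t)%N.
Proof.
move=> h0 h1; rewrite val_sw.
case: (eqVneq t iP) => [->|_] /=; first by apply/idP/idP => ?; lia.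
case: (eqVneq t iP1) => [->|_] /=; first by apply/idP/idP => ?; lia.
by [].
Qed.

Definition loc (al be : nat -> nat -> K) x y :=
  al (e x iP) (e x iP1) * dl x y + be (e x iP) (e x iP1) * dl (swp x P.+1) y.

Lemma comp_loc_l al be g x z : comp (loc al be) g x z =
  al (e x iP) (e x iP1) * g x z + be (e x iP) (e x iP1) * g (swp x P.+1) z.
Proof.
rewrite /comp /loc.
rewrite (eq_bigr (fun y => al (e x iP) (e x iP1) * (dl x y * g y z) +
   be (e x iP) (e x iP1) * (dl (swp x P.+1) y * g y z))); last first.
  by move=> y _; rewrite mulrDl !mulrA.
by rewrite big_split /= -!mulr_sumr !sum_dl.
Qed.

Lemma ent0 x : ent x P.+1 = e x iP. Proof. exact: (entE x iP). Qed.
Lemma ent1 x : ent x P.+2 = e x iP1. Proof. exact: (entE x iP1). Qed.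

Lemma TcE x y : Tc P.+1 x y = loc alT beT x y.
Proof.
rewrite /Tc /loc /alT /beT ent0 ent1.
case: ltngtP => h.
- by [].
- ring.
- rewrite h. ring.
Qed.



Definition setp x u v := repl (repl x iP.+1 u) iP1.+1 v.

Lemma iPF : (iP == iP1) = false. Proof. exact: negbTE iP_neq. Qed.
Lemma iP1F : (iP1 == iP) = false. Proof. by rewrite eq_sym iPF. Qed.

Definition rng v := (0 < v)%N && (v <= N)%N.
Lemma rng_e x t : rng (e x t).
Proof. by rewrite /rng e_gt0 e_le. Qed.

Lemma e_repl' x (p : 'I_n) v t : rng v -> e (repl x p.+1 v) t = if t == p then v else e x t.
Proof. by case/andP => ? ?; rewrite e_repl. Qed.

Lemma e_setp u v x t : rng u -> rng v ->
  e (setp x u v) t = if t == iP then u else if t == iP1 then v else e x t.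
Proof.
move=> hu hv; rewrite /setp e_repl' // e_repl' //.
case: (eqVneq t iP1) => [->|h1]; first by rewrite eq_sym (negbTE iP_neq).
by case: (t == iP).
Qed.

Lemma repl0_setp u x : rng u -> repl x iP.+1 u = setp x u (e x iP1).
Proof.
move=> hu; apply: eq_T => t; rewrite e_setp ?rng_e // e_repl' //.
by case: (eqVneq t iP1) => [->|]; rewrite ?iPF ?iP1F //; case: (t == iP).
Qed.

Lemma repl1_setp v x : rng v -> repl x iP1.+1 v = setp x (e x iP) v.
Proof.
move=> hv; apply: eq_T => t; rewrite e_setp ?rng_e // e_repl' //.
by case: (eqVneq t iP) => [->|]; rewrite ?(negbTE iP_neq) //; case: (t == iP1).
Qed.

Lemma swp_setp u v x : rng u -> rng v -> swp (setp x u v) P.+1 = setp x v u.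
Proof.
move=> hu hv; apply: eq_T => t; rewrite e_swp !e_setp //.
case: (eqVneq t iP) => [->|h0]; first by rewrite sw_iP eqxx eq_sym (negbTE iP_neq).
case: (eqVneq t iP1) => [->|h1]; first by rewrite sw_iP1 eqxx.
by rewrite sw_other // (negbTE h0) (negbTE h1).
Qed.

Lemma repl0_setp2 u v c x : rng u -> rng v -> rng c -> repl (setp x u v) iP.+1 c = setp x c v.
Proof.
move=> hu hv hw; apply: eq_T => t; rewrite e_repl' // !e_setp //.
by case: (t == iP).
Qed.

Lemma repl1_setp2 u v c x : rng u -> rng v -> rng c -> repl (setp x u v) iP1.+1 c = setp x u c.
Proof.
move=> hu hv hw; apply: eq_T => t; rewrite e_repl' // !e_setp //.
case: (eqVneq t iP1) => [->|]; last by [].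
by rewrite eq_sym (negbTE iP_neq).
Qed.

Lemma swp_setp0 x : swp x P.+1 = setp x (e x iP1) (e x iP).
Proof.
apply: eq_T => t; rewrite e_swp e_setp ?rng_e //.
case: (eqVneq t iP) => [->|h0]; first by rewrite sw_iP.
case: (eqVneq t iP1) => [->|h1]; first by rewrite sw_iP1.
by rewrite sw_other.
Qed.

Lemma e_swp0 x : e (swp x P.+1) iP = e x iP1. Proof. by rewrite e_swp sw_iP. Qed.
Lemma e_swp1 x : e (swp x P.+1) iP1 = e x iP. Proof. by rewrite e_swp sw_iP1. Qed.
Lemma e_swpo x p : p != iP -> p != iP1 -> e (swp x P.+1) p = e x p.
Proof. by move=> h0 h1; rewrite e_swp sw_other. Qed.

Lemma swp_repl x (p : 'I_n) v : (0 < v)%N -> (v <= N)%N -> p != iP -> p != iP1 ->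
  swp (repl x p.+1 v) P.+1 = repl (swp x P.+1) p.+1 v.
Proof.
move=> v0 vN h0 h1; apply: eq_T => t; rewrite e_swp !e_repl // e_swp.
have -> : (sw t == p) = (t == p).
  by rewrite -{1}(sw_other h0 h1); apply/eqP/eqP => [/sw_inj|->].
by [].
Qed.

Lemma e_repl_ne x (p t : 'I_n) v : (0 < v)%N -> (v <= N)%N -> t != p ->
  e (repl x p.+1 v) t = e x t.
Proof. by move=> v0 vN h; rewrite e_repl // (negbTE h). Qed.

Lemma big_ltS (R : Type) (idx : R) (op : Monoid.com_law idx) (G : 'I_n -> R) :
  \big[op/idx]_(r < n | (r < P.+1)%N) G r = op (\big[op/idx]_(r < n | (r < P)%N) G r) (G iP).
Proof.
rewrite (bigD1 iP) //= Monoid.mulmC; congr (op _ _); apply: eq_bigl => r.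
rewrite -val_eqE /=; apply/idP/idP => [/andP[]|h]; first by move=> ? ?; lia.
by apply/andP; split; lia.
Qed.

Lemma big_gtS (R : Type) (idx : R) (op : Monoid.com_law idx) (G : 'I_n -> R) :
  \big[op/idx]_(r < n | (P < r)%N) G r = op (\big[op/idx]_(r < n | (P.+1 < r)%N) G r) (G iP1).
Proof.
rewrite (bigD1 iP1) //= Monoid.mulmC; congr (op _ _); apply: eq_bigl => r.
rewrite -val_eqE /=; apply/idP/idP => [/andP[]|h]; first by move=> ? ?; lia.
by apply/andP; split; lia.
Qed.

Lemma big_lt_swp (R : Type) (idx : R) (op : Monoid.com_law idx) (G : nat -> R) x :
  \big[op/idx]_(r < n | (r < P)%N) G (e (swp x P.+1) r) = \big[op/idx]_(r < n | (r < P)%N) G (e x r).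
Proof.
apply: eq_bigr => r h; rewrite e_swpo //; apply/negP => /eqP E; move: h; rewrite E /=; lia.
Qed.

Lemma big_gt_swp (R : Type) (idx : R) (op : Monoid.com_law idx) (G : nat -> R) x :
  \big[op/idx]_(r < n | (P.+1 < r)%N) G (e (swp x P.+1) r) = \big[op/idx]_(r < n | (P.+1 < r)%N) G (e x r).
Proof.
apply: eq_bigr => r h; rewrite e_swpo //; apply/negP => /eqP E; move: h; rewrite E /=; lia.
Qed.

Lemma prod_swp (Pr : pred 'I_n) (G : nat -> K) x : (forall t, Pr (sw t) = Pr t) ->
  \prod_(t | Pr t) G (e (swp x P.+1) t) = \prod_(t | Pr t) G (e x t).
Proof. exact: big_swp. Qed.
Lemma nsum_swp (Pr : pred 'I_n) (G : nat -> nat) x : (forall t, Pr (sw t) = Pr t) ->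
  (\sum_(t | Pr t) G (e (swp x P.+1) t) = \sum_(t | Pr t) G (e x t))%N.
Proof. exact: big_swp. Qed.
Lemma prod_ltS (G : 'I_n -> K) :
  \prod_(r < n | (r < P.+1)%N) G r = (\prod_(r < n | (r < P)%N) G r) * G iP.
Proof. exact: big_ltS. Qed.
Lemma nsum_ltS (G : 'I_n -> nat) :
  (\sum_(r < n | (r < P.+1)%N) G r = (\sum_(r < n | (r < P)%N) G r) + G iP)%N.
Proof. exact: big_ltS. Qed.
Lemma prod_gtS (G : 'I_n -> K) :
  \prod_(r < n | (P < r)%N) G r = (\prod_(r < n | (P.+1 < r)%N) G r) * G iP1.
Proof. exact: big_gtS. Qed.
Lemma prod_lt_swp (G : nat -> K) x :
  \prod_(r < n | (r < P)%N) G (e (swp x P.+1) r) = \prod_(r < n | (r < P)%N) G (e x r).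
Proof. exact: big_lt_swp. Qed.
Lemma nsum_lt_swp (G : nat -> nat) x :
  (\sum_(r < n | (r < P)%N) G (e (swp x P.+1) r) = \sum_(r < n | (r < P)%N) G (e x r))%N.
Proof. exact: big_lt_swp. Qed.
Lemma prod_gt_swp (G : nat -> K) x :
  \prod_(r < n | (P.+1 < r)%N) G (e (swp x P.+1) r) = \prod_(r < n | (P.+1 < r)%N) G (e x r).
Proof. exact: big_gt_swp. Qed.


Definition LE (al be : nat -> nat -> K) b := forall i j (D : nat -> nat -> K),
  (i == b.+1)%:R * (al b j * D b j + be b j * D j b)
  + (j == b.+1)%:R * (kt b i * sgn (parEF m k l b && par i)) * (al i b * D i b + be i b * D b i)
  = al i j * ((i == b.+1)%:R * D b j + (j == b.+1)%:R * (kt b i * sgn (parEF m k l b && par i)) * D i b)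
  + be i j * ((j == b.+1)%:R * D b i + (i == b.+1)%:R * (kt b j * sgn (parEF m k l b && par j)) * D j b).

Definition LF (al be : nat -> nat -> K) b := forall i j (D : nat -> nat -> K),
  (i == b)%:R * (kt b j)^-1 * (al b.+1 j * D b.+1 j + be b.+1 j * D j b.+1)
  + (j == b)%:R * sgn (parEF m k l b && par i) * (al i b.+1 * D i b.+1 + be i b.+1 * D b.+1 i)
  = al i j * ((i == b)%:R * (kt b j)^-1 * D b.+1 j + (j == b)%:R * sgn (parEF m k l b && par i) * D i b.+1)
  + be i j * ((j == b)%:R * (kt b i)^-1 * D b.+1 i + (i == b)%:R * sgn (parEF m k l b && par j) * D j b.+1).

Definition Cx b x := \prod_(r < n | (r < P)%N) kt b (e x r).
Definition Cy b x := \prod_(r < n | (P.+1 < r)%N) (kt b (e x r))^-1.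
Definition ox x := odd (\sum_(r < n | (r < P)%N) nat_of_bool (par (e x r))).

Lemma ltF (p : 'I_n) : p != iP -> (val p != P).
Proof. by rewrite -val_eqE. Qed.
Lemma ltF1 (p : 'I_n) : p != iP1 -> (val p != P.+1).
Proof. by rewrite -val_eqE. Qed.

Lemma cE_swp b x p : p != iP -> p != iP1 -> cE b (swp x P.+1) p = cE b x p.
Proof.
move=> /ltF h0 /ltF1 h1; rewrite /cE.
rewrite (@prod_swp (fun r : 'I_n => (r < p)%N) (kt b)); last by move=> t; rewrite sw_lt.
rewrite (@nsum_swp (fun r : 'I_n => (r < p)%N) (fun v => nat_of_bool (par v))) //.
by move=> t; rewrite sw_lt.
Qed.

Lemma cF_swp b x p : p != iP -> p != iP1 -> cF b (swp x P.+1) p = cF b x p.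
Proof.
move=> /ltF h0 /ltF1 h1; rewrite /cF.
rewrite (@prod_swp (fun r : 'I_n => (p < r)%N) (fun v => (kt b v)^-1)); last first.
  by move=> t; rewrite sw_gt.
rewrite (@nsum_swp (fun r : 'I_n => (r < p)%N) (fun v => nat_of_bool (par v))) //.
by move=> t; rewrite sw_lt.
Qed.

Lemma cE_iP b x : cE b x iP = Cx b x * sgn (parEF m k l b && ox x) * sgn (par b.+1).
Proof. by []. Qed.

Lemma cE_iP1 b x : cE b x iP1 =
  Cx b x * kt b (e x iP) * (sgn (parEF m k l b && ox x) * sgn (parEF m k l b && par (e x iP))) * sgn (par b.+1).
Proof.
rewrite /cE; change (nat_of_ord iP1) with P.+1.
by rewrite prod_ltS nsum_ltS oddD oddb sgnX.
Qed.

Lemma cE_swp_iP b x : cE b (swp x P.+1) iP = cE b x iP.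
Proof.
rewrite /cE; change (nat_of_ord iP) with P.
by rewrite (prod_lt_swp (kt b)) (nsum_lt_swp (fun v => nat_of_bool (par v))).
Qed.

Lemma cE_swp_iP1 b x : cE b (swp x P.+1) iP1 =
  Cx b x * kt b (e x iP1) * (sgn (parEF m k l b && ox x) * sgn (parEF m k l b && par (e x iP1))) * sgn (par b.+1).
Proof.
rewrite /cE; change (nat_of_ord iP1) with P.+1.
rewrite prod_ltS nsum_ltS oddD oddb sgnX e_swp0.
by rewrite (prod_lt_swp (kt b)) (nsum_lt_swp (fun v => nat_of_bool (par v))).
Qed.

Lemma cF_iP b x : cF b x iP =
  sgn (parEF m k l b && ox x) * sgn (par b) * (Cy b x * (kt b (e x iP1))^-1).
Proof.
rewrite /cF; change (nat_of_ord iP) with P.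
by rewrite prod_gtS.
Qed.

Lemma cF_iP1 b x : cF b x iP1 =
  (sgn (parEF m k l b && ox x) * sgn (parEF m k l b && par (e x iP))) * sgn (par b) * Cy b x.
Proof.
rewrite /cF; change (nat_of_ord iP1) with P.+1.
by rewrite nsum_ltS oddD oddb sgnX.
Qed.

Lemma cF_swp_iP b x : cF b (swp x P.+1) iP =
  sgn (parEF m k l b && ox x) * sgn (par b) * (Cy b x * (kt b (e x iP))^-1).
Proof.
rewrite /cF; change (nat_of_ord iP) with P.
rewrite prod_gtS e_swp1 (prod_gt_swp (fun v => (kt b v)^-1)).
by rewrite (nsum_lt_swp (fun v => nat_of_bool (par v))).
Qed.

Lemma cF_swp_iP1 b x : cF b (swp x P.+1) iP1 =
  (sgn (parEF m k l b && ox x) * sgn (parEF m k l b && par (e x iP1))) * sgn (par b) * Cy b x.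
Proof.
rewrite /cF; change (nat_of_ord iP1) with P.+1.
rewrite nsum_ltS oddD oddb sgnX e_swp0.
by rewrite (prod_gt_swp (fun v => (kt b v)^-1)) (nsum_lt_swp (fun v => nat_of_bool (par v))).
Qed.


Lemma main_E al be b x z : rng b -> rng b.+1 -> LE al be b ->
  comp (Ec b) (loc al be) x z = comp (loc al be) (Ec b) x z.
Proof.
move=> hb hb1 HLE; have /andP[b0 bN] := hb; have /andP[b10 b1N] := hb1.
rewrite comp_Ec_l comp_loc_l !EcE !mulr_sumr -big_split /=.
apply: (sum_split2 iP_neq) => [p h0 h1|].
  have f0 : (iP == p) = false by rewrite eq_sym (negbTE h0).
  have f1 : (iP1 == p) = false by rewrite eq_sym (negbTE h1).
  rewrite /loc !e_repl' // f0 f1 e_swpo // cE_swp // swp_repl //.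
  by case: (e x p == b.+1); ring.
rewrite e_swp0 e_swp1 cE_swp_iP cE_swp_iP1 cE_iP1 cE_iP.
rewrite (repl0_setp _ hb) (repl1_setp _ hb) swp_setp0 repl0_setp2 ?rng_e //.
rewrite repl1_setp2 ?rng_e // /loc.
rewrite !e_setp ?rng_e // !eqxx ?iPF ?iP1F !swp_setp ?rng_e //.
have H := HLE (e x iP) (e x iP1) (fun u v => dl (setp x u v) z); simpl in H.
move: H; set L := (X in X = _); set R := (X in _ = X) => H.
apply/eqP; rewrite -subr_eq0; apply/eqP.
transitivity ((Cx b x * sgn (parEF m k l b && ox x) * sgn (par b.+1)) * (L - R)); last first.
  by rewrite H; ring.
rewrite /L /R !ifz; ring.
Qed.

Lemma main_F al be b x z : rng b -> rng b.+1 -> LF al be b ->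
  comp (Fc b) (loc al be) x z = comp (loc al be) (Fc b) x z.
Proof.
move=> hb hb1 HLF; have /andP[b0 bN] := hb; have /andP[b10 b1N] := hb1.
rewrite comp_Fc_l comp_loc_l !FcE !mulr_sumr -big_split /=.
apply: (sum_split2 iP_neq) => [p h0 h1|].
  have f0 : (iP == p) = false by rewrite eq_sym (negbTE h0).
  have f1 : (iP1 == p) = false by rewrite eq_sym (negbTE h1).
  rewrite /loc !e_repl' // f0 f1 e_swpo // cF_swp // swp_repl //.
  by case: (e x p == b); ring.
rewrite e_swp0 e_swp1 cF_swp_iP cF_swp_iP1 cF_iP1 cF_iP.
rewrite (repl0_setp _ hb1) (repl1_setp _ hb1) swp_setp0 repl0_setp2 ?rng_e //.
rewrite repl1_setp2 ?rng_e // /loc.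
rewrite !e_setp ?rng_e // !eqxx ?iPF ?iP1F !swp_setp ?rng_e //.
have H := HLF (e x iP) (e x iP1) (fun u v => dl (setp x u v) z); simpl in H.
move: H; set L := (X in X = _); set R := (X in _ = X) => H.
apply/eqP; rewrite -subr_eq0; apply/eqP.
transitivity ((sgn (parEF m k l b && ox x) * sgn (par b) * Cy b x) * (L - R)); last first.
  by rewrite H; ring.
rewrite /L /R !ifz; ring.
Qed.


Lemma diag_loc d al be x z : (forall y, d (swp y P.+1) = d y) ->
  comp (loc al be) (diag d) x z = comp (diag d) (loc al be) x z.
Proof.
move=> Hd; rewrite comp_loc_l comp_diag_l /loc /diag Hd.
by ring.
Qed.

Lemma prodK_swp (G : nat -> K) x :
  \prod_(p < n) G (ent (swp x P.+1) p.+1) = \prod_(p < n) G (ent x p.+1).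
Proof.
transitivity (\prod_(p < n) G (e (swp x P.+1) p)); first by apply: eq_bigr => p _; rewrite entE.
rewrite (@prod_swp (fun _ => true) G x) //.
by apply: eq_bigr => p _; rewrite entE.
Qed.

Lemma ScE x y : Sc P.+1 x y = loc alS beS x y.
Proof.
rewrite /Sc TcE /loc /alS /beS ent0 ent1.
case: (colr (e x iP) == colr (e x iP1)); first by [].
rewrite /sc ent0 ent1.
case: (e x iP =P e x iP1) => [E|_]; first by rewrite E; ring.
by ring.
Qed.

Lemma mat_ext (f g : T -> T -> K) : (forall x y, f x y = g x y) -> mat f = mat g.
Proof. by move=> H; apply/matrixP => r s; rewrite /mat !mxE H. Qed.


End Loc.

Lemma q_neq0 : q != 0.
Proof.
rewrite /qv tofrac_eq0; apply/eqP => H.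
have := congr1 (mcoeff U_(@ord0 m)) H; rewrite mcoeffXU eqxx mcoeff0 => /eqP.
by rewrite oner_eq0.
Qed.

Lemma two_neq0 : (2%:R : K) != 0.
Proof.
rewrite -(rmorph_nat (GRing.RMorphism.clone _ _ (@tofrac _) _)) /= tofrac_eq0.
rewrite -mpolyC_nat mpolyC_eq0.
change ((2%:R : (Rdefinitions.R)[i]) != 0).
by rewrite Num.Theory.pnatr_eq0.
Qed.

Lemma diag_E d b x z : (forall y (p : 'I_n), e y p = b.+1 -> d (repl y p.+1 b) = d y) ->
  comp (Ec b) (diag d) x z = comp (diag d) (Ec b) x z.
Proof.
move=> Hd; rewrite comp_Ec_l comp_diag_l EcE mulr_sumr; apply: eq_bigr => p _.
case: eqP => h; last by ring.
by rewrite /diag Hd //; ring.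
Qed.

Lemma diag_F d b x z : (forall y (p : 'I_n), e y p = b -> d (repl y p.+1 b.+1) = d y) ->
  comp (Fc b) (diag d) x z = comp (diag d) (Fc b) x z.
Proof.
move=> Hd; rewrite comp_Fc_l comp_diag_l FcE mulr_sumr; apply: eq_bigr => p _.
case: eqP => h; last by ring.
by rewrite /diag Hd //; ring.
Qed.

Lemma diag_diag d d' x z : comp (diag d) (diag d') x z = comp (diag d') (diag d) x z.
Proof. by rewrite !comp_diag_l /diag; ring. Qed.

Lemma colr_S b : b \notin [seq dd k l c | c <- iota 1 m.-1] -> colr b.+1 = colr b.
Proof.
rewrite /Defs.colr => hb; congr S; apply: eq_big_nat => c /andP[c1 cm].
congr nat_of_bool; rewrite ltnS leq_eqVlt; case: eqP => // E.
exfalso; move: hb; rewrite -E => /negP; apply; apply/mapP; exists c => //.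
rewrite mem_iota; lia.
Qed.

Lemma d0_repl b v y (p : 'I_n) : rng v -> e y p = b -> colr v = colr b ->
  Qv m (colr (ent (repl y p.+1 v) 1)) = Qv m (colr (ent y 1)).
Proof.
move=> hv hp hc.
pose o0 : 'I_n := Ordinal (leq_ltn_trans (leq0n p) (ltn_ord p)).
have E y' : ent y' 1 = e y' o0 := entE y' o0.
rewrite !E e_repl' //; case: (o0 =P p) => [E0|_]; last by [].
by rewrite E0 hp hc.
Qed.

End PartB.

Section Abs.
Variables (F : fieldType) (q : F) (par : nat -> bool) (colr : nat -> nat).
Hypotheses (hq : q != 0) (h2 : 2%:R != 0 :> F).

Definition sg (c : bool) : F := (-1) ^+ c.
Definition kbA (c j : nat) : F := if j == c then (if par j then q^-1 else q) else 1.
Definition ktA (c j : nat) : F := kbA c j * (kbA c.+1 j)^-1.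
Definition alTA (i j : nat) : F :=
  if (i < j)%N then q - q^-1
  else if i == j then ((q - q^-1) + sg (par i) * (q + q^-1)) / 2%:R else 0.
Definition beTA (i j : nat) : F :=
  if (i < j)%N then sg (par i && par j) else if i == j then 0 else sg (par i && par j).
Definition alSA (i j : nat) : F :=
  if colr i == colr j then alTA i j else if i == j then sg (par i) else 0.
Definition beSA (i j : nat) : F :=
  if colr i == colr j then beTA i j else if i == j then 0 else sg (par i && par j).

Definition LEA (al be : nat -> nat -> F) b := forall i j (D : nat -> nat -> F),
  (i == b.+1)%:R * (al b j * D b j + be b j * D j b)
  + (j == b.+1)%:R * (ktA b i * sg ((par b (+) par b.+1) && par i)) * (al i b * D i b + be i b * D b i)
  = al i j * ((i == b.+1)%:R * D b j + (j == b.+1)%:R * (ktA b i * sg ((par b (+) par b.+1) && par i)) * D i b)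
  + be i j * ((j == b.+1)%:R * D b i + (i == b.+1)%:R * (ktA b j * sg ((par b (+) par b.+1) && par j)) * D j b).

Definition LFA (al be : nat -> nat -> F) b := forall i j (D : nat -> nat -> F),
  (i == b)%:R * (ktA b j)^-1 * (al b.+1 j * D b.+1 j + be b.+1 j * D j b.+1)
  + (j == b)%:R * sg ((par b (+) par b.+1) && par i) * (al i b.+1 * D i b.+1 + be i b.+1 * D b.+1 i)
  = al i j * ((i == b)%:R * (ktA b j)^-1 * D b.+1 j + (j == b)%:R * sg ((par b (+) par b.+1) && par i) * D i b.+1)
  + be i j * ((j == b)%:R * (ktA b i)^-1 * D b.+1 i + (i == b)%:R * sg ((par b (+) par b.+1) && par j) * D j b.+1).

Ltac decide_nat :=
  repeat match goal with
  | |- context [ (?u < ?v)%N ] =>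
      first [ have -> : (u < v)%N = true by (apply/idP; lia)
            | have -> : (u < v)%N = false by (apply/negbTE/negP => ?; lia) ]
  | |- context [ @eq_op _ ?u ?v ] =>
      first [ have -> : (u == v) = true by (apply/eqP; lia)
            | have -> : (u == v) = false by (apply/negbTE/eqP => ?; lia) ]
  end.

Ltac case_par :=
  repeat match goal with |- context [par ?u] => case: (par u) end.

Ltac fin := rewrite /alTA /beTA /ktA /kbA; decide_nat; case_par; rewrite /sg /=;
  field; rewrite ?hq ?h2 ?oner_neq0.

Lemma LEA_T b : LEA alTA beTA b.
Proof.
move=> i j D.
case: (eqVneq i b.+1) => [-> | ni].
  case: (eqVneq j b.+1) => [-> | nj]; first by fin.
  by case: (ltngtP j b) => [hj|hj|->]; fin.
case: (eqVneq j b.+1) => [-> | nj].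
  by case: (ltngtP i b) => [hi|hi|->]; fin.
by rewrite /=; ring.
Qed.

Lemma LFA_T b : LFA alTA beTA b.
Proof.
move=> i j D.
case: (eqVneq i b) => [-> | ni].
  case: (eqVneq j b) => [-> | nj]; first by fin.
  by case: (ltngtP j b.+1) => [hj|hj|->]; fin.
case: (eqVneq j b) => [-> | nj].
  by case: (ltngtP i b.+1) => [hi|hi|->]; fin.
by rewrite /=; ring.
Qed.


Lemma LEA_S b : colr b.+1 = colr b -> LEA alSA beSA b.
Proof.
move=> Hc' i j D.
case: (eqVneq i b.+1) => [-> | ni].
  case: (eqVneq (colr j) (colr b)) => Hj.
    have := LEA_T b b.+1 j D.
    by rewrite /alSA /beSA Hc' Hj !eqxx /=.
  have jb : j != b by apply/eqP => E; move: Hj; rewrite E eqxx.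
  have jb1 : j != b.+1 by apply/eqP => E; move: Hj; rewrite E Hc' eqxx.
  have f1 : (colr b == colr j) = false by rewrite eq_sym (negbTE Hj).
  rewrite /alSA /beSA Hc' ?f1 ?(negbTE Hj) !eqxx /=.
  by fin.
case: (eqVneq j b.+1) => [-> | nj].
  case: (eqVneq (colr i) (colr b)) => Hi.
    have := LEA_T b i b.+1 D.
    by rewrite /alSA /beSA Hc' Hi !eqxx (negbTE ni) /=.
  have ib : i != b by apply/eqP => E; move: Hi; rewrite E eqxx.
  have ib1 : i != b.+1 by apply/eqP => E; move: Hi; rewrite E Hc' eqxx.
  have f1 : (colr b == colr i) = false by rewrite eq_sym (negbTE Hi).
  rewrite /alSA /beSA Hc' ?f1 ?(negbTE Hi) !eqxx /=.
  by fin.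
by rewrite /=; ring.
Qed.

Lemma LFA_S b : colr b.+1 = colr b -> LFA alSA beSA b.
Proof.
move=> Hc' i j D.
case: (eqVneq i b) => [-> | ni].
  case: (eqVneq (colr j) (colr b)) => Hj.
    have := LFA_T b b j D.
    by rewrite /alSA /beSA Hc' Hj !eqxx /=.
  have jb : j != b by apply/eqP => E; move: Hj; rewrite E eqxx.
  have jb1 : j != b.+1 by apply/eqP => E; move: Hj; rewrite E Hc' eqxx.
  have f1 : (colr b == colr j) = false by rewrite eq_sym (negbTE Hj).
  rewrite /alSA /beSA Hc' ?f1 ?(negbTE Hj) !eqxx /=.
  by fin.
case: (eqVneq j b) => [-> | nj].
  case: (eqVneq (colr i) (colr b)) => Hi.
    have := LFA_T b i b D.
    by rewrite /alSA /beSA Hc' Hi !eqxx (negbTE ni) /=.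
  have ib : i != b by apply/eqP => E; move: Hi; rewrite E eqxx.
  have ib1 : i != b.+1 by apply/eqP => E; move: Hi; rewrite E Hc' eqxx.
  have f1 : (colr b == colr i) = false by rewrite eq_sym (negbTE Hi).
  rewrite /alSA /beSA Hc' ?f1 ?(negbTE Hi) !eqxx /=.
  by fin.
by rewrite /=; ring.
Qed.
End Abs.


Section Final.
Variables (m n : nat) (k l : nat -> nat).
Local Notation K := (Kf m).
Local Notation T := (Tn m n k l).
Local Notation N := (NN m k l).
Local Notation bd := [seq dd k l c | c <- iota 1 m.-1].

Lemma LE_T b : @LE m k l (alT m k l) (beT m k l) b.
Proof. exact: (@LEA_T (Kf m) (qv m) (par m k l) (q_neq0 m) (two_neq0 m) b). Qed.
Lemma LF_T b : @LF m k l (alT m k l) (beT m k l) b.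
Proof. exact: (@LFA_T (Kf m) (qv m) (par m k l) (q_neq0 m) (two_neq0 m) b). Qed.
Lemma LE_S b : colr m k l b.+1 = colr m k l b -> @LE m k l (alS m k l) (beS m k l) b.
Proof. exact: (@LEA_S (Kf m) (qv m) (par m k l) (colr m k l) (q_neq0 m) (two_neq0 m) b). Qed.
Lemma LF_S b : colr m k l b.+1 = colr m k l b -> @LF m k l (alS m k l) (beS m k l) b.
Proof. exact: (@LFA_S (Kf m) (qv m) (par m k l) (colr m k l) (q_neq0 m) (two_neq0 m) b). Qed.

Definition goodM (X : 'M[K]_#|T|) := forall Y, PsiGen m n k l Y -> X *m Y = Y *m X.

Lemma rngP b : (0 < b)%N -> (b <= N)%N -> rng m k l b.
Proof. by move=> h1 h2; rewrite /rng h1 h2. Qed.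

Lemma good_loc P (HP : (P.+1 < n)%N) al be :
  (forall b, (0 < b)%N -> (b < N)%N -> b \notin bd -> @LE m k l al be b /\ @LF m k l al be b) ->
  goodM (mat (loc HP al be)).
Proof.
move=> HL Y [[b [b1 bN [->|->]]] | [b [b1 bN bnd [->|->]]]].
- apply: mat_comm => x z.
  change (Kc b) with (diag (fun x : T => \prod_(p < n) kb m k l b (ent x p.+1))).
  by apply: diag_loc => y; exact: (prodK_swp HP (kb m k l b) y).
- apply: mat_comm => x z.
  change (Kic b) with (diag (fun x : T => \prod_(p < n) (kb m k l b (ent x p.+1))^-1)).
  by apply: diag_loc => y; exact: (prodK_swp HP (fun v => (kb m k l b v)^-1) y).
- apply: mat_comm => x z; symmetry; apply: main_E.
  + exact: rngP b1 (ltnW bN).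
  + exact: rngP (ltn0Sn b) bN.
  + by case: (HL b b1 bN bnd).
- apply: mat_comm => x z; symmetry; apply: main_F.
  + exact: rngP b1 (ltnW bN).
  + exact: rngP (ltn0Sn b) bN.
  + by case: (HL b b1 bN bnd).
Qed.

Lemma good_S0 : goodM (mat (@S0c m n k l)).
Proof.
change (@S0c m n k l) with (diag (fun x : T => Qv m (colr m k l (ent x 1)))).
move=> Y [[b [b1 bN [->|->]]] | [b [b1 bN bnd [->|->]]]].
- by apply: mat_comm => x z; apply: diag_diag.
- by apply: mat_comm => x z; apply: diag_diag.
- apply: mat_comm => x z; symmetry; apply: diag_E => y p hp.
  apply: (d0_repl (rngP b1 (ltnW bN)) hp).
  by rewrite (colr_S bnd).
- apply: mat_comm => x z; symmetry; apply: diag_F => y p hp.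
  apply: (d0_repl (rngP (ltn0Sn b) bN) hp).
  by rewrite (colr_S bnd).
Qed.

Lemma goodM_mul X1 X2 : goodM X1 -> goodM X2 -> goodM (X1 *m X2).
Proof. by move=> h1 h2 Y hY; rewrite -mulmxA h2 // !mulmxA h1. Qed.

Lemma goodM_inv X : goodM X -> goodM (invmx X).
Proof. by move=> h Y hY; apply: comm_invmx; apply: h. Qed.

Lemma goodM_1 : goodM 1%:M.
Proof. by move=> Y _; rewrite mul1mx mulmx1. Qed.

Lemma goodM_foldr (F : nat -> 'M[K]_#|T|) B s :
  (forall a, a \in s -> goodM (F a)) -> goodM B -> goodM (foldr (fun a M => F a *m M) B s).
Proof.
elim: s => [|a s IH] H HB //=.
apply: goodM_mul; first by apply: H; rewrite inE eqxx.
by apply: IH => // b bs; apply: H; rewrite inE bs orbT.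
Qed.

Lemma good_T a : (1 <= a)%N -> (a < n)%N -> goodM (Tmat m n k l a).
Proof.
move=> a1 an.
have HP : (a.-1.+1 < n)%N by lia.
have Ea : a = a.-1.+1 by lia.
rewrite /Tmat Ea (mat_ext (TcE HP)).
by apply: good_loc => b b0 bN bnd; split; [exact: LE_T | exact: LF_T].
Qed.

Lemma good_Sc a : (1 <= a)%N -> (a < n)%N -> goodM (mat (@Sc m n k l a)).
Proof.
move=> a1 an.
have HP : (a.-1.+1 < n)%N by lia.
have Ea : a = a.-1.+1 by lia.
rewrite Ea (mat_ext (ScE HP)).
by apply: good_loc => b b0 bN bnd; split; [exact: LE_S (colr_S bnd) | exact: LF_S (colr_S bnd)].
Qed.

Lemma good_T0 : goodM (T0mat m n k l).
Proof.
rewrite /T0mat; apply: goodM_foldr.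
  move=> a; rewrite mem_iota => /andP[a1 an]; apply: goodM_inv; apply: good_T => //; lia.
apply: goodM_mul; last exact: good_S0.
rewrite /theta; apply: goodM_foldr; last exact: goodM_1.
by move=> a; rewrite mem_rev mem_iota => /andP[a1 an]; apply: good_Sc => //; lia.
Qed.

End Final.

Unset Implicit Arguments.

Theorem mainTheorem4 (m n : nat) (k l : nat -> nat) :
  (1 <= m)%N -> (1 <= n)%N -> (0 < NN m k l)%N ->
  forall X Y : 'M[Kf m]_#|Tn m n k l|,
    gen_alg (PhiGen m n k l) X ->
    gen_alg (PsiGen m n k l) Y ->
    X *m Y = Y *m X.
Proof.
move=> hm hn hN X Y gX gY.
have H : forall X Y, PhiGen m n k l X -> PsiGen m n k l Y -> X *m Y = Y *m X.
  move=> X' Y' [->|[a [a1 an ->]]] hY; first exact: good_T0.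
  by apply: good_T => //; lia.
exact: (gen_comm H gX gY).
Qed.
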